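(* Let $H=(W,F)$ be a connected simple undirected graph with a designated root $r_1\in W$ and a set of terminals $S=\{s_1,\dots,s_k\}\subseteq W\setminus\{r_1\}$ with $k\ge 2$, such that no edge of $H$ joins two terminals. Let $H'$, $H'_1$, $H'_2$, $M_1$, $M_2$ and $g$ be as defined in the context. Then for every set $J$ that is a basis of both $M_1$ and $M_2$, the edge set $g(J)$ is an $S$-wide spanning tree of $H$.
   Context: A spanning tree $T$ of $H$ is $S$-wide if every connected component of $T-r_1$ contains at most one terminal. $H'=(W',F')$ is obtained from $H$ by adding $k-1$ new vertices $r_2,\dots,r_k$ and, for each edge $r_1x\in F$ and each $i\in\{2,\dots,k\}$, a new edge $r_ix$. $H'_1$ is the multigraph obtained from $H'$ by identifying $r_1,\dots,r_k$ into a single vertex (keeping parallel edges), and $H'_2$ is the multigraph obtained from $H'$ by identifying $s_1,\dots,s_k$ into a single vertex (keeping parallel edges and loops); both have edge set $F'$. $M_1$ and $M_2$ are the graphic matroids of $H'_1$ and $H'_2$ on ground set $F'$. Define $f:F'\to F$ by $f(xy)=r_1y$ if $x\in\{r_1,\dots,r_k\}$, $f(xy)=xr_1$ if $y\in\{r_1,\dots,r_k\}$, and $f(xy)=xy$ otherwise; for $J\subseteq F'$, $g(J)=\{f(e):e\in J\}$. *)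

(* Defs.v *)
From mathcomp Require Import all_boot.
Set Implicit Arguments. Unset Strict Implicit. Unset Printing Implicit Defensive.

(* A (multi)graph is given by a finite vertex type T, a finite edge type E and
   an endpoint map ends : E -> T * T (loops and parallel edges allowed). *)

Section Graphs.
Variables (T E : finType) (ends : E -> T * T).

Definition madj (J : {set E}) : rel T :=
  fun x y => [exists e in J, (ends e == (x, y)) || (ends e == (y, x))].

(* J contains no cycle: no edge of J has its endpoints connected in J - e
   (so loops and pairs of parallel edges are cycles). *)
Definition acyclic (J : {set E}) : bool :=
  [forall e in J, ~~ connect (madj (J :\ e)) (ends e).1 (ends e).2].

Definition gindep (G J : {set E}) : bool := (J \subset G) && acyclic J.

Definition gbasis (G J : {set E}) : Prop :=
  gindep G J /\ forall J' : {set E}, J \subset J' -> gindep G J' -> J' = J.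

Definition spanning_tree (B : {set E}) : Prop :=
  acyclic B /\ forall x y, connect (madj B) x y.

End Graphs.

Section Construction.
Variables (T E : finType) (ends : E -> T * T) (r1 : T) (k : nat) (s : 'I_k -> T).

Definition incident_r1 (e : E) : bool := ((ends e).1 == r1) || ((ends e).2 == r1).
Definition other_end (e : E) : T := if (ends e).1 == r1 then (ends e).2 else (ends e).1.

(* Vertices of H' : W plus r_{j+2} = inr j for j : 'I_(k-1). *)
Definition Vp := (T + 'I_k.-1)%type.
(* Edges of H' : inl e (original edge e in F) or inr (j, e) = the copy r_{j+2} x
   of the edge e = r1 x. Only those in Fp are actual edges. *)
Definition Ep := (E + ('I_k.-1 * E))%type.

Definition Fp : {set Ep} :=
  [set x : Ep | match x with inl _ => true | inr (_, e) => incident_r1 e end].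

Definition endsHp (x : Ep) : Vp * Vp :=
  match x with
  | inl e => (inl (ends e).1, inl (ends e).2)
  | inr (j, e) => (inr j, inl (other_end e))
  end.

(* H'_1: r_1,...,r_k identified into the single vertex None *)
Definition phi1 (v : Vp) : option Vp :=
  match v with
  | inl w => if w == r1 then None else Some (inl w)
  | inr _ => None
  end.

Definition terminals : {set T} := [set s i | i : 'I_k].

(* H'_2: s_1,...,s_k identified into the single vertex None *)
Definition phi2 (v : Vp) : option Vp :=
  match v with
  | inl w => if w \in terminals then None else Some (inl w)
  | inr j => Some (inr j)
  end.

Definition ends1 (x : Ep) : option Vp * option Vp :=
  (phi1 (endsHp x).1, phi1 (endsHp x).2).
Definition ends2 (x : Ep) : option Vp * option Vp :=
  (phi2 (endsHp x).1, phi2 (endsHp x).2).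

(* f : F' -> F  (r_i x |-> r_1 x, other edges unchanged) and g *)
Definition fmap (x : Ep) : E := match x with inl e => e | inr (_, e) => e end.
Definition gmap (J : {set Ep}) : {set E} := fmap @: J.

Definition S_wide (B : {set E}) : Prop :=
  spanning_tree ends B /\
  forall i j : 'I_k, i != j ->
    ~~ connect (fun x y => [&& x != r1, y != r1 & madj ends B x y]) (s i) (s j).

End Construction.

(* Main.v *)
Require Import Defs.
From mathcomp Require Import all_boot.
Set Implicit Arguments. Unset Strict Implicit. Unset Printing Implicit Defensive.

Lemma connect_ind' (V : finType) (e : rel V) (P : V -> Prop) x :
  P x -> (forall y z, P y -> e y z -> P z) -> forall y, connect e x y -> P y.
Proof.
move=> Px IH y /connectP [p pth ->]; elim: p x Px pth => //= z p IHp x Px /andP[exz pth].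
exact: IHp (IH _ _ Px exz) pth.
Qed.

Lemma connect_map (V V' : finType) (e : rel V) (e' : rel V') (h : V -> V') :
  (forall a b, e a b -> connect e' (h a) (h b)) ->
  forall a b, connect e a b -> connect e' (h a) (h b).
Proof.
move=> H a; apply: connect_ind' => // y z Cy /H Cyz; exact: connect_trans Cy Cyz.
Qed.

Lemma path_lift (V V' : finType) (e : rel V) (e' : rel V') (h : V -> V') (w : V) :
  (forall a b, a != w -> b != w -> e a b -> connect e' (h a) (h b)) ->
  forall a q, path e a q -> w \notin a :: q -> connect e' (h a) (h (last a q)).
Proof.
move=> H a q; elim: q a => [|b q IH] a /=; first by [].
case/andP=> eab pth; rewrite !in_cons !negb_or => /and3P[wa wb wq].
apply: connect_trans (H _ _ _ _ eab) _; first by rewrite eq_sym.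
  by rewrite eq_sym.
by apply: IH => //; rewrite in_cons negb_or wb.
Qed.

Section G.
Variables (T E : finType) (ends : E -> T * T).

Lemma madj_sym A : symmetric (madj ends A).
Proof.
move=> x y; apply/existsP/existsP => -[e /andP[eA H]]; exists e; rewrite eA /=;
  by rewrite orbC.
Qed.

Lemma csym A : connect_sym (madj ends A).
Proof. exact/sym_connect_sym/madj_sym. Qed.

Lemma madj_edge (A : {set E}) e : e \in A -> madj ends A (ends e).1 (ends e).2.
Proof. by move=> eA; apply/existsP; exists e; rewrite eA -surjective_pairing eqxx. Qed.

Lemma madjP (A : {set E}) x y : reflect (exists2 e, e \in A & ends e = (x, y) \/ ends e = (y, x))
  (madj ends A x y).
Proof.
apply: (iffP existsP) => [[e /andP[eA /orP[/eqP H|/eqP H]]]|[e eA [H|H]]].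
- by exists e => //; left.
- by exists e => //; right.
- by exists e; rewrite eA H eqxx.
- by exists e; rewrite eA H eqxx orbT.
Qed.

Lemma madj_mono (A B : {set E}) : A \subset B -> forall x y, connect (madj ends A) x y -> connect (madj ends B) x y.
Proof.
move=> AB; apply: connect_sub => x y /madjP[e eA H]; apply: connect1; apply/madjP.
by exists e => //; apply: (subsetP AB).
Qed.

Lemma decomp A x u v : connect (madj ends (x |: A)) u v ->
  connect (madj ends A) u v \/
  ((connect (madj ends A) u (ends x).1 \/ connect (madj ends A) u (ends x).2) /\
   (connect (madj ends A) v (ends x).1 \/ connect (madj ends A) v (ends x).2)).
Proof.
move: v; apply: connect_ind'; first by left.
move=> y z Py /madjP[e]; rewrite in_setU1 => /orP[/eqP-> Hx|eA He].
  have Hz : z = (ends x).1 \/ z = (ends x).2.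
    by case: Hx => ->; [right|left].
  have Hy : y = (ends x).1 \/ y = (ends x).2.
    by case: Hx => ->; [left|right].
  right; split; last by case: Hz => ->; [left|right]; apply: connect0.
  case: Py => [Cy|[]//]; by case: Hy => <-; [left|right].
have ayz : madj ends A y z by apply/madjP; exists e.
have Cyz := connect1 ayz.
have Czy : connect (madj ends A) z y by rewrite csym.
case: Py => [Cy|[H1 H2]]; first by left; exact: connect_trans Cy Cyz.
right; split => //; case: H2 => H2; [left|right]; exact: connect_trans Czy H2.
Qed.

Lemma acyclicU J x : acyclic ends J -> x \notin J ->
  ~~ connect (madj ends J) (ends x).1 (ends x).2 -> acyclic ends (x |: J).
Proof.
move=> /forallP aJ xJ nC; apply/forallP => e; apply/implyP; rewrite in_setU1.
case: (eqVneq e x) => [->|nex] /= He; first by rewrite setU1K.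
have := aJ e; rewrite He /= => nCe.
apply/negP => C.
have Hs : (x |: J) :\ e = x |: (J :\ e).
  apply/setP => z; rewrite !inE; case: (eqVneq z x) => [->|] //=; by rewrite eq_sym nex.
rewrite Hs in C.
have sub : J :\ e \subset J by apply: subsetDl.
have Cuv : connect (madj ends J) (ends e).1 (ends e).2 by apply: connect1; exact: madj_edge.
have M := madj_mono sub.
case: (decomp C) => [C'|[[H1|H1] [H2|H2]]]; first by rewrite C' in nCe.
- by move: nCe; rewrite (connect_trans H1 _) // csym.
- move: nC; rewrite (connect_trans (connect_trans _ Cuv) (M _ _ H2)) //.
  by rewrite csym; apply: M.
- move: nC; rewrite (connect_trans (connect_trans _ (_ : connect _ (ends e).2 (ends e).1)) (M _ _ H1)) //.
    by rewrite csym; apply: M.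
  by rewrite csym.
- by move: nCe; rewrite (connect_trans H1 _) // csym.
Qed.

Lemma basis_conn G J : gbasis ends G J -> forall x, x \in G ->
  connect (madj ends J) (ends x).1 (ends x).2.
Proof.
move=> [/andP[JG aJ] max] x xG; case xJ: (x \in J).
  by apply: connect1; apply: madj_edge.
apply/negPn/negP => nC.
have := max (x |: J) (subsetUr _ _); rewrite /gindep subUset sub1set xG JG.
move=> /(_ (acyclicU aJ (negbT xJ) nC)) eq.
by move: xJ; rewrite -eq setU11.
Qed.

End G.

Section M.
Variables (T E : finType) (ends : E -> T * T) (r1 : T) (k : nat) (s : 'I_k -> T).

Definition lift1 (w : T) : option (Vp T k) := phi1 r1 (inl w).
Definition lift2 (w : T) : option (Vp T k) := phi2 s (inl w).
Definition psi (a : option (Vp T k)) : T :=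
  match a with Some (inl w) => w | _ => r1 end.

Lemma psi_lift w : psi (lift1 w) = w.
Proof. by rewrite /lift1 /=; case: eqP. Qed.

Lemma ends1_lift (x : Ep E k) : x \in Fp ends r1 k ->
  ends1 ends r1 x = (lift1 (ends (fmap x)).1, lift1 (ends (fmap x)).2) \/
  ends1 ends r1 x = (lift1 (ends (fmap x)).2, lift1 (ends (fmap x)).1).
Proof.
case: x => [e|[j e]] /=; first by left.
rewrite /Fp inE /incident_r1 /ends1 /= /other_end /lift1 /=.
case: (ends e) => a b /=.
have [ea|na] := eqVneq a r1.
  by move=> _; left.
by rewrite (negbTE na) /= => /eqP ->; rewrite eqxx; right.
Qed.

Lemma fmap_inl (J : {set Ep E k}) e : J \subset Fp ends r1 k -> e \in gmap J ->
  (ends e).1 != r1 -> (ends e).2 != r1 -> inl e \in J.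
Proof.
move=> JF /imsetP[[e'|[j e']] xJ ->] //= H1 H2.
have := subsetP JF _ xJ; rewrite /Fp inE /incident_r1.
by rewrite (negbTE H1) (negbTE H2).
Qed.


Lemma tree1 (J : {set Ep E k}) : gbasis (@ends1 T E ends r1 k) (Fp ends r1 k) J ->
  (forall x y, connect (madj ends setT) x y) -> spanning_tree ends (gmap J).
Proof.
move=> B1 Hconn; have [/andP[JF aJ] _] := B1; split.
  apply/forallP => e; apply/implyP => /imsetP[x xJ ->].
  apply/negP => C.
  have := (forallP aJ) x; rewrite xJ implyTb => nC.
  suff C1 : connect (madj (ends1 ends r1 (k:=k)) (J :\ x))
      (lift1 (ends (fmap x)).1) (lift1 (ends (fmap x)).2).
    case: (ends1_lift (subsetP JF _ xJ)) => E1; rewrite E1 /= in nC.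
      by rewrite C1 in nC.
    by rewrite csym C1 in nC.
  apply: (connect_map (h:=lift1) _ C) => a b /madjP [e'' ].
  rewrite in_setD1 => /andP[ne /imsetP[y yJ Ey]] He''.
  apply: connect1; apply/madjP; exists y.
    rewrite in_setD1 yJ andbT; apply: contraNneq ne => eyx; by rewrite Ey eyx.
  case: (ends1_lift (subsetP JF _ yJ)) => ->; rewrite -Ey; case: He'' => -> /=; by auto.
move=> x y; rewrite -(psi_lift x) -(psi_lift y).
have Cfp : connect (madj (ends1 ends r1 (k:=k)) (Fp ends r1 k)) (lift1 x) (lift1 y).
  apply: (connect_map (h:=lift1)) (Hconn x y) => a b /madjP[e _ He].
  apply: connect1; apply/madjP; exists (inl e); first by rewrite /Fp inE.
  by rewrite /ends1 /=; case: He => ->; auto.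
have C1 : connect (madj (ends1 ends r1 (k:=k)) J) (lift1 x) (lift1 y).
  apply: (connect_sub _ Cfp) => a b /madjP [z zF Hz].
  have := basis_conn B1 zF; case: Hz => -> //=; by rewrite csym.
apply: (connect_map (h:=psi)) C1 => a b /madjP [z zJ Hz].
apply: connect1; apply/madjP; exists (fmap z); first exact: imset_f.
case: (ends1_lift (subsetP JF _ zJ)) => E1; rewrite E1 in Hz;
  case: Hz => -[<- <-]; rewrite !psi_lift -?surjective_pairing; auto;
  by case: (ends (fmap z)); auto.
Qed.


Lemma lift2_s i : lift2 (s i) = None.
Proof. by rewrite /lift2 /= /terminals imset_f. Qed.

Lemma wide2 (J : {set Ep E k}) : injective s ->
  gindep (@ends2 T E ends r1 k s) (Fp ends r1 k) J ->
  forall i j : 'I_k, i != j ->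
    ~~ connect (fun x y => [&& x != r1, y != r1 & madj ends (gmap J) x y]) (s i) (s j).
Proof.
move=> sinj /andP[JF aJ] i j nij; apply/negP => /connectP [p pth].
case: (shortenP pth) => p' pth' up _ {pth}.
case: p' pth' up => [|x1 rest] /=.
  by move=> _ _ /sinj eij; rewrite eij eqxx in nij.
case/andP=> /and3P[si1 x11 /madjP[e1 e1J He1]] pth' /andP[nin _] Elast.
have [n1 n2] : (ends e1).1 != r1 /\ (ends e1).2 != r1 by case: He1 => ->.
have ie1 := fmap_inl JF e1J n1 n2.
have step : forall a b, a != s i -> b != s i ->
    [&& a != r1, b != r1 & madj ends (gmap J) a b] ->
    connect (madj (ends2 ends r1 (k:=k) s) (J :\ inl e1)) (lift2 a) (lift2 b).
  move=> a b nai nbi /and3P[na nb /madjP[e'' e''J He'']].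
  have [m1 m2] : (ends e'').1 != r1 /\ (ends e'').2 != r1 by case: He'' => ->.
  have ie'' := fmap_inl JF e''J m1 m2.
  apply: connect1; apply/madjP; exists (inl e'').
    rewrite in_setD1 ie'' andbT; apply/eqP => -[ee]; subst e''.
    by case: He1 He'' => -> [] [] *; subst; rewrite ?eqxx in nai nbi.
  have -> : ends2 ends r1 s (inl e'') = (lift2 (ends e'').1, lift2 (ends e'').2) by [].
  by case: He'' => -> /=; auto.
have C := path_lift step pth' nin.
rewrite -Elast lift2_s in C.
have := (forallP aJ) (inl e1); rewrite ie1 implyTb.
have -> : ends2 ends r1 s (inl e1) = (lift2 (ends e1).1, lift2 (ends e1).2) by [].
case: He1 => -> /=; rewrite lift2_s => nC.
  by move: nC; rewrite csym C.
by rewrite C in nC.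
Qed.

End M.

Theorem lemma7 (T E : finType) (ends : E -> T * T) (r1 : T) (k : nat)
    (s : 'I_k -> T) :
  (* H is a simple graph *)
  (forall e, (ends e).1 != (ends e).2) ->
  (forall e e', ends e' = ends e \/ ends e' = ((ends e).2, (ends e).1) -> e = e') ->
  (* H is connected *)
  (forall x y, connect (madj ends setT) x y) ->
  (* terminals: k >= 2 distinct vertices, different from r1, pairwise nonadjacent *)
  2 <= k ->
  injective s ->
  (forall i, s i != r1) ->
  (forall e, ~~ (((ends e).1 \in terminals s) && ((ends e).2 \in terminals s))) ->
  forall J : {set Ep E k},
    gbasis (@ends1 T E ends r1 k) (Fp ends r1 k) J ->
    gbasis (@ends2 T E ends r1 k s) (Fp ends r1 k) J ->
    S_wide ends r1 s (gmap J).
Proof.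
move=> _ _ Hconn _ sinj _ _ J B1 [I2 _]; split; first exact: (tree1 B1 Hconn).
exact: (wide2 sinj I2).
Qed.
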